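(* Let $G$ be the final graph of the uncoordinated construction (described in the context) on a set $P\subset\mathbb{R}^d$ of $n$ points with parameter $s>1$, let $\alpha$ be the aspect ratio of $P$, and let $\mathcal{W}=\{(P_i,Q_i)\}_{i=1}^m$ be the corresponding greedy WSPD, i.e. one pair $(B_r(p),B_r(q))$ with $r=|pq|/(2s+2)$ for each edge $pq$ of $G$. Then $\sum_{i=1}^m(|P_i|+|Q_i|)=O(n s^d\lg\alpha)$, where the implied constant depends only on $d$. Consequently the total number of messages in the distributed construction (described in the context) is $O(n s^d\lg\alpha)$.
   Context: Fix $d\ge 1$; $|xy|$ is Euclidean distance; $\lg$ is logarithm base 2; $B_r(p)=\{x\in P:|px|\le r\}$. The aspect ratio is $\alpha=\max_{u,v\in P}|uv|/\min_{u\ne v\in P}|uv|$. Uncoordinated construction: start with the graph $G$ on vertex set $P$ with no edges. Every ordered pair $(p,q)$ of distinct points of $P$ is processed exactly once, in an arbitrary order, one at a time. When $(p,q)$ is processed, the edge $pq$ is added to $G$ unless $G$ currently contains an edge whose endpoints can be labeled $p',q'$ with $|pp'|\le |p'q'|/(2s+2)$ and $|qq'|\le |p'q'|/(2s+2)$. $G$ is the graph after all pairs are processed. Distributed message model: whenever an edge $pq$ is built, one message is sent to each node of $B_r(p)$ and one to each node of $B_r(q)$, with $r=|pq|/(2s+2)$, informing it of the edge; so building $pq$ costs $|B_r(p)|+|B_r(q)|$ messages, and no other messages are counted. *)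

(* Defs.v *)
From HB Require Import structures.
From mathcomp Require Import all_boot all_order all_algebra.
From mathcomp Require Import all_classical all_reals all_analysis.
Set Implicit Arguments. Unset Strict Implicit. Unset Printing Implicit Defensive.
Import Order.TTheory GRing.Theory Num.Theory.
Local Open Scope ring_scope.

Section Defs.
Variables (R : realType) (d : nat).
Notation pt := 'rV[R]_d.

Definition dist (x y : pt) : R := Num.sqrt (\sum_(i < d) (x 0 i - y 0 i) ^+ 2).

Definition lg (x : R) : R := ln x / ln 2.

Definition maxdist (P : seq pt) : R :=
  \big[Num.max/0]_(u <- P) \big[Num.max/0]_(v <- P) dist u v.
Definition mindist (P : seq pt) : R :=
  \big[Num.min/maxdist P]_(u <- P) \big[Num.min/maxdist P]_(v <- P | u != v) dist u v.
(* aspect ratio alpha = max |uv| / min_{u<>v} |uv|  (meaningful for |P| >= 2) *)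
Definition aspect_ratio (P : seq pt) : R := maxdist P / mindist P.

Definition ball (P : seq pt) (r : R) (p : pt) : seq pt := [seq x <- P | dist p x <= r].

Definition rad (s : R) (p q : pt) : R := dist p q / (2 * s + 2).

Definition blocks (s : R) (e : pt * pt) (p q : pt) : bool :=
  let r := rad s e.1 e.2 in
  ((dist p e.1 <= r) && (dist q e.2 <= r)) || ((dist p e.2 <= r) && (dist q e.1 <= r)).

Definition process (s : R) (G : seq (pt * pt)) (pq : pt * pt) : seq (pt * pt) :=
  if has (fun e => blocks s e pq.1 pq.2) G then G else rcons G pq.

Definition uncoordinated_graph (s : R) (order : seq (pt * pt)) : seq (pt * pt) :=
  foldl (process s) [::] order.

Definition ordered_pairs (P : seq pt) : seq (pt * pt) :=
  [seq (p, q) | p <- P, q <- [seq q <- P | q != p]].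

Definition greedy_wspd (P : seq pt) (s : R) (G : seq (pt * pt)) : seq (seq pt * seq pt) :=
  [seq (ball P (rad s e.1 e.2) e.1, ball P (rad s e.1 e.2) e.2) | e <- G].

Definition wspd_size (W : seq (seq pt * seq pt)) : nat :=
  \sum_(w <- W) (size w.1 + size w.2).

(* Messages of the distributed model: building edge pq costs |B_r(p)| + |B_r(q)|. *)
Definition message_count (P : seq pt) (s : R) (G : seq (pt * pt)) : nat :=
  \sum_(e <- G) (size (ball P (rad s e.1 e.2) e.1) + size (ball P (rad s e.1 e.2) e.2)).

End Defs.

(* Main.v *)
Require Import Defs.
From HB Require Import structures.
From mathcomp Require Import all_boot all_order all_algebra.
From mathcomp Require Import all_classical all_reals all_analysis.
From mathcomp Require Import ring lra.
Import Order.TTheory GRing.Theory Num.Theory.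
Local Open Scope ring_scope.


Section DistL.
Variables (R : realType) (d : nat).
Notation pt := 'rV[R]_d.

Lemma dist_ge0 (u v : pt) : 0 <= dist u v.
Proof. exact: sqrtr_ge0. Qed.

Lemma dist_sym (u v : pt) : dist u v = dist v u.
Proof.
rewrite /dist; congr Num.sqrt; apply: eq_bigr => i _.
by rewrite -sqrrN opprB.
Qed.

Lemma dist_refl (u : pt) : dist u u = 0.
Proof.
rewrite /dist big1 ?sqrtr0 // => i _; by rewrite subrr expr0n.
Qed.

Lemma coord_le_dist (u v : pt) i : `|u 0 i - v 0 i| <= dist u v.
Proof.
rewrite /dist -sqrtr_sqr ler_sqrt; last by apply: sumr_ge0 => j _; exact: sqr_ge0.
rewrite (bigD1 i) //= lerDl; apply: sumr_ge0 => j _; exact: sqr_ge0.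
Qed.

Lemma dist_le (u v : pt) (w : R) : 0 <= w ->
  (forall i, `|u 0 i - v 0 i| <= w) -> dist u v <= d%:R * w.
Proof.
move=> w0 H; rewrite /dist -(@ger0_norm _ (d%:R * w)); last by rewrite mulr_ge0.
rewrite -sqrtr_sqr ler_sqrt; last exact: sqr_ge0.
apply: (@le_trans _ _ (\sum_(i < d) w ^+ 2)).
  apply: ler_sum => i _; rewrite -real_normK ?num_real //.
  by rewrite lerXn2r // ?nnegrE.
rewrite sumr_const card_ord exprMn -[w ^+ 2 *+ d]mulr_natl.
apply: ler_wpM2r; first exact: sqr_ge0.
case: d => [|n]; first by rewrite expr2 mul0r.
rewrite expr2 ler_peMl // ler1n //.
Qed.

Lemma dist_gt0 (u v : pt) : u != v -> 0 < dist u v.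
Proof.
move=> uv; rewrite lt_neqAle dist_ge0 andbT eq_sym; apply/eqP => /eqP.
rewrite sqrtr_eq0 => H.
have Hs : \sum_(i < d) (u 0 i - v 0 i) ^+ 2 = 0.
  apply/eqP; rewrite eq_le H /=; apply: sumr_ge0 => j _; exact: sqr_ge0.
move/negP: uv; apply; apply/eqP/matrixP => i j.
rewrite (ord1 i); apply/eqP; rewrite -subr_eq0 -sqrf_eq0; apply/eqP.
exact: (psumr_eq0P (fun k _ => sqr_ge0 (u 0 k - v 0 k)) Hs).
Qed.

End DistL.


Section Graph.
Variables (R : realType) (d : nat) (s : R).
Hypothesis s1 : 1 < s.
Notation pt := 'rV[R]_d.

Lemma s22_gt0 : 0 < 2 * s + 2.
Proof. by apply: ltr_wpDl; [rewrite mulr_ge0 // ltW // (lt_trans ltr01)|]. Qed.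

Lemma rad_ge0 (p q : pt) : 0 <= Defs.rad s p q.
Proof. by rewrite /Defs.rad divr_ge0 ?dist_ge0 // ltW // s22_gt0. Qed.

Lemma blocks_refl (e : pt * pt) : blocks s e e.1 e.2.
Proof. by rewrite /blocks !dist_refl rad_ge0. Qed.

Definition GInv (G : seq (pt * pt)) := uniq G /\
  forall e1 e2, e1 \in G -> e2 \in G -> e1 != e2 ->
    ~~ blocks s e1 e2.1 e2.2 || ~~ blocks s e2 e1.1 e1.2.

Lemma fold_inv (L G0 : seq (pt * pt)) : GInv G0 ->
  GInv (foldl (process s) G0 L) /\
  forall e, e \in foldl (process s) G0 L -> (e \in G0) || (e \in L).
Proof.
elim: L G0 => [|pq L IH] G0 HG /=; first by split=> // e ->.
have [HG' Hsub] : GInv (process s G0 pq) /\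
   forall e, e \in process s G0 pq -> (e \in G0) || (e == pq).
  rewrite /process; case: ifPn => Hb; first by split => // e ->.
  split; last by move=> e; rewrite mem_rcons inE orbC.
  case: HG => HU HB; split.
    rewrite rcons_uniq HU andbT; apply/negP => Hin; move/hasPn: Hb => Hb.
    by move: (Hb _ Hin); rewrite blocks_refl.
  move=> e1 e2; rewrite !mem_rcons !inE.
  move/hasPn: Hb => Hb.
  case/orP => [/eqP-> | H1]; case/orP => [/eqP-> | H2].
  - by rewrite eqxx.
  - by move=> _; rewrite (Hb _ H2) orbT.
  - by move=> _; rewrite (Hb _ H1).
  - exact: HB.
have [IH1 IH2] := IH _ HG'.
split => // e /IH2 /orP [/Hsub /orP [->|/eqP->] | He] //; rewrite ?inE ?eqxx ?He ?orbT //.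
Qed.

End Graph.


Section Cells.
Variables (R : realType) (d : nat) (x : 'rV[R]_d).

Lemma trunc_close (a b : R) : 0 <= a -> 0 <= b -> Num.truncn a = Num.truncn b -> `|a - b| < 1.
Proof.
move=> a0 b0 E; have := truncn_itv a0; have := truncn_itv b0; rewrite E.
set n := Num.truncn b => /andP[h1 h2] /andP[h3 h4].
rewrite -natr1 in h2 h4.
rewrite ltr_norml; apply/andP; split; lra.
Qed.

Definition cell (N : nat) (w : R) (z : 'rV[R]_d) (i : 'I_d) : 'I_(2 * N).+1 :=
  inord (Num.truncn ((z 0 i - x 0 i) / w + N%:R)).

Lemma cell_val N (w : R) (z : 'rV[R]_d) i : 0 < w -> `|z 0 i - x 0 i| <= N%:R * w ->
  0 <= (z 0 i - x 0 i) / w + N%:R /\ leq (Num.truncn ((z 0 i - x 0 i) / w + N%:R)) (2 * N).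
Proof.
move=> w0 H.
have H' : `|(z 0 i - x 0 i) / w| <= N%:R by rewrite normrM (gtr0_norm (x:=w^-1)) ?invr_gt0 // ler_pdivrMr.
move: H'; rewrite ler_norml => /andP[h1 h2].
split; first lra.
rewrite truncn_le_nat -natr1 natrM; lra.
Qed.

Lemma cell_inj N (w : R) (z1 z2 : 'rV[R]_d) i : 0 < w ->
  `|z1 0 i - x 0 i| <= N%:R * w -> `|z2 0 i - x 0 i| <= N%:R * w ->
  cell N w z1 i = cell N w z2 i -> `|z1 0 i - z2 0 i| <= w.
Proof.
move=> w0 H1 H2 /(congr1 val) /=.
have [a1 t1] := @cell_val N w z1 i w0 H1; have [a2 t2] := @cell_val N w z2 i w0 H2.
rewrite /cell !inordK ?ltnS // => E.
have := trunc_close _ _ a1 a2 E.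
have -> : (z1 0 i - x 0 i) / w + N%:R - ((z2 0 i - x 0 i) / w + N%:R) = (z1 0 i - z2 0 i) / w.
  by field; rewrite gt_eqF.
rewrite normrM (gtr0_norm (x:=w^-1)) ?invr_gt0 // ltr_pdivrMr // mul1r => h; exact: ltW.
Qed.

End Cells.


Section Core.
Variables (R : realType) (d : nat) (s m : R) (K : nat) (x : 'rV[R]_d)
  (k : 'rV[R]_d * 'rV[R]_d -> nat).
Hypotheses (hd : (0 < d)%N) (s1 : 1 < s) (m0 : 0 < m).

Definition sa e := m * 2 ^+ k e.
Definition sdel e := sa e / (2 * s + 2).
Definition sw e := sdel e / d%:R.
Definition Np := (2 * d)%N.
Definition Nq := (Num.truncn (d%:R * (4 * s + 6))).+1.

Lemma sw_facts e : 0 < sw e /\ sdel e = d%:R * sw e.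
Proof.
have d0 : 0 < d%:R :> R by rewrite ltr0n.
have c0 : 0 < 2 * s + 2 by move: s1 => ?; lra.
have a0 : 0 < sa e by rewrite /sa mulr_gt0 // exprn_gt0.
split; first by rewrite /sw /sdel !divr_gt0.
rewrite /sw mulrC -mulrA mulVf ?mulr1 // gt_eqF //.
Qed.

Lemma rad_facts (e : 'rV[R]_d * 'rV[R]_d) :
  sa e <= dist e.1 e.2 < 2 * sa e ->
  sdel e <= Defs.rad s e.1 e.2 /\ Defs.rad s e.1 e.2 <= 2 * sdel e /\
  dist e.1 e.2 + Defs.rad s e.1 e.2 <= (4 * s + 6) * sdel e.
Proof.
move=> /andP[h1 h2]; have c0 : 0 < 2 * s + 2 by move: s1 => ?; lra.
rewrite /sdel /Defs.rad.
set L := dist e.1 e.2; set A := sa e; set c := 2 * s + 2.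
have cne : c != 0 by rewrite gt_eqF.
split; first by rewrite ler_pM2r ?invr_gt0.
split; first by rewrite mulrA ler_pM2r ?invr_gt0 //; exact: ltW.
have -> : L + L / c = L * (1 + c^-1) by ring.
have -> : (4 * s + 6) * (A / c) = (2 * A) * (1 + c^-1).
  rewrite /c; field; rewrite -/c //.
rewrite ler_pM2r; first exact: ltW.
by rewrite ltr_wpDr // ltW // invr_gt0.
Qed.


Lemma Nq_ge : d%:R * (4 * s + 6) <= Nq%:R.
Proof.
rewrite /Nq; have h : 0 <= d%:R * (4 * s + 6) :> R.
  by rewrite mulr_ge0 //; move: s1 => ?; lra.
by have /andP[_ /ltW] := truncn_itv h.
Qed.

Lemma core (E : seq ('rV[R]_d * 'rV[R]_d)) : uniq E ->
 (forall e, e \in E -> [/\ (k e <= K)%N, sa e <= dist e.1 e.2 < 2 * sa e &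
                         dist e.1 x <= Defs.rad s e.1 e.2]) ->
 (forall e1 e2, e1 \in E -> e2 \in E -> e1 != e2 ->
    ~~ blocks s e1 e2.1 e2.2 || ~~ blocks s e2 e1.1 e1.2) ->
 (size E <= K.+1 * (2 * Np).+1 ^ d * (2 * Nq).+1 ^ d)%N.
Proof.
move=> UE HE HB.
pose code e := ((inord (k e) : 'I_K.+1),
   [ffun i => @cell R d x Np (sw e) e.1 i], [ffun i => @cell R d x Nq (sw e) e.2 i]).
have Bp : forall e, e \in E -> forall i, `|e.1 0 i - x 0 i| <= Np%:R * sw e.
  move=> e /HE [_ hL hr] i; have [w0 dw] := sw_facts e.
  have [r1 [r2 _]] := rad_facts _ hL.
  apply: le_trans (coord_le_dist _ _ _ _ i) _; apply: le_trans hr _.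
  apply: le_trans r2 _; rewrite dw /Np natrM mulrA //.
have Bq : forall e, e \in E -> forall i, `|e.2 0 i - x 0 i| <= Nq%:R * sw e.
  move=> e /HE [_ hL hr] i; have [w0 dw] := sw_facts e.
  have [r1 [r2 r3]] := rad_facts _ hL.
  have -> : e.2 0 i - x 0 i = (e.2 0 i - e.1 0 i) + (e.1 0 i - x 0 i) by ring.
  apply: le_trans (ler_normD _ _) _.
  apply: le_trans (lerD (coord_le_dist _ _ _ _ i) (coord_le_dist _ _ _ _ i)) _.
  rewrite dist_sym; apply: le_trans (lerD (lexx _) hr) _.
  apply: le_trans r3 _; rewrite dw mulrA; apply: ler_wpM2r; first exact: ltW.
  by rewrite mulrC Nq_ge.
have inj : {in E &, injective code}.
  move=> e1 e2 H1 H2 /= [Ek Ep Eq].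
  have [k1 _ _] := HE _ H1; have [k2 _ _] := HE _ H2.
  move/(congr1 val): Ek; rewrite /= !inordK ?ltnS // => Ek.
  have Ew : sw e1 = sw e2 by rewrite /sw /sdel /sa Ek.
  have [w0 dw] := sw_facts e1.
  have cp : forall i, `|e1.1 0 i - e2.1 0 i| <= sw e1.
    move=> i; apply: (@cell_inj R d x _ _ _ _ i w0 (Bp _ H1 i)); first by rewrite Ew; exact: Bp.
    move/ffunP: Ep => /(_ i); rewrite !ffunE Ew => h; exact: h.
  have cq : forall i, `|e1.2 0 i - e2.2 0 i| <= sw e1.
    move=> i; apply: (@cell_inj R d x _ _ _ _ i w0 (Bq _ H1 i)); first by rewrite Ew; exact: Bq.
    move/ffunP: Eq => /(_ i); rewrite !ffunE Ew => h; exact: h.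
  have dp : dist e1.1 e2.1 <= sdel e1 by rewrite dw; apply: dist_le => //; exact: ltW.
  have dq : dist e1.2 e2.2 <= sdel e1 by rewrite dw; apply: dist_le => //; exact: ltW.
  have Ed : sdel e1 = sdel e2 by rewrite /sdel /sa Ek.
  have [_ hL1 _] := HE _ H1; have [_ hL2 _] := HE _ H2.
  have [r1 _] := rad_facts _ hL1; have [r2 _] := rad_facts _ hL2.
  have b1 : blocks s e1 e2.1 e2.2.
    by rewrite /blocks (dist_sym _ _ e2.1) (dist_sym _ _ e2.2) (le_trans dp r1) (le_trans dq r1).
  rewrite Ed in dp dq.
  have b2 : blocks s e2 e1.1 e1.2 by rewrite /blocks (le_trans dp r2) (le_trans dq r2).
  case: (eqVneq e1 e2) => // ne; move: (HB _ _ H1 H2 ne).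
  by rewrite b1 b2.
have U : uniq (map code E) by rewrite map_inj_in_uniq.
rewrite -(size_map code) -(card_uniqP U); apply: leq_trans (max_card _) _.
by rewrite !card_prod !card_ffun !card_ord.
Qed.

End Core.


Section PFacts.
Variables (R : realType) (d : nat) (P : seq 'rV[R]_d).

Lemma le_maxdist u v : u \in P -> v \in P -> dist u v <= maxdist P.
Proof.
move=> hu hv; rewrite /maxdist.
apply: (bigmax_sup_seq _ _ _ _ _ hu) => //.
exact: (le_bigmax_seq _ _ _ _ hv).
Qed.

Lemma ge_mindist u v : u \in P -> v \in P -> u != v -> mindist P <= dist u v.
Proof.
move=> hu hv uv; rewrite /mindist.
apply: le_trans (ge_bigmin_seq _ _ _ _ hu _) _ => //.
exact: (ge_bigmin_seq _ _ _ _ hv uv).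
Qed.

Lemma two_pts : uniq P -> (2 <= size P)%N -> exists u v, [/\ u \in P, v \in P & u != v].
Proof.
case: P => [|a [|b r]] //= /andP[ha _] _; exists a, b.
split; rewrite ?inE ?eqxx ?orbT //; apply/eqP => ab; move: ha; by rewrite ab inE eqxx.
Qed.

Lemma maxdist_gt0 : uniq P -> (2 <= size P)%N -> 0 < maxdist P.
Proof.
move=> U S; have [u [v [hu hv uv]]] := two_pts U S.
exact: lt_le_trans (@dist_gt0 R d u v uv) (le_maxdist u v hu hv).
Qed.

Lemma mindist_gt0 : uniq P -> (2 <= size P)%N -> 0 < mindist P.
Proof.
move=> U S; have M0 := maxdist_gt0 U S; rewrite /mindist.
apply: lt_bigmin => // u _.
apply: lt_bigmin => // v uv.
exact: (@dist_gt0 R d u v uv).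
Qed.

End PFacts.

Section Logs.
Variable (R : realType).

Lemma ln2_gt0 : 0 < ln (2 : R).
Proof. by apply: ln_gt0; rewrite ltr1n. Qed.

Lemma lg_ge0 (y : R) : 1 <= y -> 0 <= lg y.
Proof. by move=> h; apply: divr_ge0; [exact: ln_ge0 | exact: ltW ln2_gt0]. Qed.

Lemma lg_le (y z : R) : 0 < y -> y <= z -> lg y <= lg z.
Proof.
move=> y0 yz; rewrite /lg ler_pM2r ?invr_gt0 ?ln2_gt0 //.
by rewrite ler_ln // posrE (lt_le_trans y0).
Qed.

Lemma scale (y : R) : 1 <= y ->
  2 ^+ Num.truncn (lg y) <= y < 2 ^+ (Num.truncn (lg y)).+1.
Proof.
move=> y1; have y0 : 0 < y by apply: lt_le_trans y1.
have /andP[h1 h2] := truncn_itv (lg_ge0 _ y1).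
set t := Num.truncn (lg y) in h1 h2 *.
have l2 := @ln2_gt0.
have p2 : forall n, (2:R) ^+ n \in Num.pos by move=> n; rewrite posrE exprn_gt0.
have e1 : forall n, ln ((2:R) ^+ n) = n%:R * ln 2 by move=> n; rewrite lnXn // mulr_natl.
move: h1 h2; rewrite /lg ler_pdivlMr // ltr_pdivrMr // => h1 h2.
apply/andP; split.
  by rewrite -ler_ln ?p2 ?posrE // e1.
by rewrite -ltr_ln ?p2 ?posrE // e1.
Qed.

End Logs.


Lemma count_sumb (T : Type) (p : pred T) (l : seq T) :
  count p l = (\sum_(x <- l) nat_of_bool (p x))%N.
Proof. by elim: l => [|x l IH]; rewrite ?big_nil ?big_cons //= IH. Qed.

Lemma double_count (T U : Type) (A : seq T) (B : seq U) (r : T -> U -> bool) :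
  (\sum_(a <- A) count (r a) B = \sum_(b <- B) count (fun a => r a b) A)%N.
Proof.
under eq_bigr do rewrite count_sumb.
under [RHS]eq_bigr do rewrite count_sumb.
exact: exchange_big.
Qed.

Lemma sum_le_const (T : eqType) (l : seq T) (f : T -> nat) B :
  (forall x, x \in l -> (f x <= B)%N) -> (\sum_(x <- l) f x <= size l * B)%N.
Proof.
elim: l => [|x l IH] H; first by rewrite big_nil.
rewrite big_cons /= mulSn leq_add // ?H ?inE ?eqxx // IH // => y hy.
by rewrite H // inE hy orbT.
Qed.

Section Main.
Variables (R : realType) (d : nat) (s : R) (P : seq 'rV[R]_d).
Hypotheses (hd : (0 < d)%N) (s1 : 1 < s) (UP : uniq P) (SP : (2 <= size P)%N).

Definition mm := mindist P.
Definition KK := Num.truncn (lg (aspect_ratio P)).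
Definition kk (e : 'rV[R]_d * 'rV[R]_d) := Num.truncn (lg (dist e.1 e.2 / mm)).
Definition BB := (KK.+1 * (2 * Np d).+1 ^ d * (2 * Nq R d s).+1 ^ d)%N.

Lemma mm_gt0 : 0 < mm.
Proof. exact: mindist_gt0. Qed.

Lemma edge_scale (e : 'rV[R]_d * 'rV[R]_d) : e.1 \in P -> e.2 \in P -> e.1 != e.2 ->
  (kk e <= KK)%N /\ sa R d mm kk e <= dist e.1 e.2 < 2 * sa R d mm kk e.
Proof.
move=> h1 h2 ne; have m0 := mm_gt0.
have hm : mm <= dist e.1 e.2 by exact: ge_mindist.
have hM : dist e.1 e.2 <= maxdist P by exact: le_maxdist.
have y1 : 1 <= dist e.1 e.2 / mm by rewrite ler_pdivlMr // mul1r.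
split.
  rewrite /kk /KK; apply: le_truncn; apply: lg_le; first exact: lt_le_trans y1.
  by rewrite /aspect_ratio ler_pM2r // invr_gt0.
have := scale _ _ y1; rewrite /sa -/(kk e) => /andP[a1 a2].
move: a1 a2; rewrite ler_pdivlMr // ltr_pdivrMr // exprS.
set X := 2 ^+ kk e; set L := dist e.1 e.2 => a1 a2.
apply/andP; split; lra.
Qed.


Lemma rad_sym (p q : 'rV[R]_d) : Defs.rad s p q = Defs.rad s q p.
Proof. by rewrite /Defs.rad dist_sym. Qed.

Lemma blocks_swap (e : 'rV[R]_d * 'rV[R]_d) p q :
  blocks s (e.2, e.1) q p = blocks s e p q.
Proof. by rewrite /blocks /= rad_sym; congr (_ || _); rewrite andbC. Qed.

Lemma count_edges (G : seq ('rV[R]_d * 'rV[R]_d)) y : uniq G ->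
  (forall e1 e2, e1 \in G -> e2 \in G -> e1 != e2 ->
    ~~ blocks s e1 e2.1 e2.2 || ~~ blocks s e2 e1.1 e1.2) ->
  (forall e, e \in G -> [/\ e.1 \in P, e.2 \in P & e.1 != e.2]) ->
  leq (count (fun e => dist e.1 y <= Defs.rad s e.1 e.2) G) BB.
Proof.
move=> UG HB HP; rewrite -size_filter.
apply: (@core R d s mm KK y kk hd s1 mm_gt0); first exact: filter_uniq.
  move=> e; rewrite mem_filter => /andP[hy /HP [h1 h2 ne]].
  by have [k1 k2] := edge_scale _ h1 h2 ne; split.
by move=> e1 e2; rewrite !mem_filter => /andP[_ H1] /andP[_ H2]; apply: HB.
Qed.

Lemma msg_bound (G : seq ('rV[R]_d * 'rV[R]_d)) : uniq G ->
  (forall e1 e2, e1 \in G -> e2 \in G -> e1 != e2 ->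
    ~~ blocks s e1 e2.1 e2.2 || ~~ blocks s e2 e1.1 e1.2) ->
  (forall e, e \in G -> [/\ e.1 \in P, e.2 \in P & e.1 != e.2]) ->
  (message_count P s G <= 2 * size P * BB)%N.
Proof.
move=> UG HB HP; rewrite /message_count big_split /= -mulnA mul2n -addnn.
under eq_bigr do rewrite !size_filter.
apply: leq_add.
  rewrite (double_count _ _ G P (fun e x => dist e.1 x <= Defs.rad s e.1 e.2)).
  by apply: sum_le_const => y _; exact: count_edges.
under eq_bigr do rewrite size_filter.
rewrite (double_count _ _ G P (fun e x => dist e.2 x <= Defs.rad s e.1 e.2)).
apply: sum_le_const => y _.
have -> : count (fun e => dist e.2 y <= Defs.rad s e.1 e.2) G =
   count (fun e => dist e.1 y <= Defs.rad s e.1 e.2) [seq (e.2, e.1) | e <- G].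
  by rewrite count_map; apply: eq_count => e /=; rewrite rad_sym.
apply: count_edges.
- rewrite map_inj_uniq // => [[a b] [c e]] /= [-> ->] //.
- move=> e1 e2 /mapP[f1 H1 ->] /mapP[f2 H2 ->] ne /=.
  rewrite !blocks_swap orbC; apply: HB => //.
  by apply: contraNneq ne => ->.
- by move=> e /mapP[f /HP [h1 h2 ne] ->] /=; split => //; rewrite eq_sym.
Qed.

End Main.


Lemma aux_ineq (R : realType) (D s t : R) : 1 <= D -> 1 < s -> t <= D*(4*s+6) -> 2*t+3 <= 23*D*s.
Proof. move=> h1 h2 h3.
have h4 : 0 <= (D - 1) * (s - 1) by apply: mulr_ge0; lra.
nra. Qed.
Lemma aux_nat (R : realType) (n : nat) : ((2 * n.+1).+1)%:R = 2 * n%:R + 3 :> R.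
Proof. rewrite -natr1 natrM -natr1. ring. Qed.

Section Fin.
Variables (R : realType) (d : nat) (s : R) (P : seq 'rV[R]_d).
Hypotheses (hd : (0 < d)%N) (s1 : 1 < s) (UP : uniq P) (SP : (2 <= size P)%N).

Lemma alpha_ge1 : 1 <= aspect_ratio P.
Proof.
have [u [v [hu hv uv]]] := two_pts _ _ _ UP SP.
have m0 := mindist_gt0 _ _ _ UP SP.
rewrite /aspect_ratio ler_pdivlMr // mul1r.
exact: le_trans (ge_mindist _ _ _ _ _ hu hv uv) (le_maxdist _ _ _ _ _ hu hv).
Qed.

Lemma K1_le : (KK R d P).+1%:R <= 1 + lg (aspect_ratio P).
Proof.
have h := lg_ge0 _ _ alpha_ge1.
rewrite -natr1 addrC lerD2l /KK.
by have /andP[] := truncn_itv h.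
Qed.

Lemma Q_le : ((2 * Nq R d s).+1)%:R <= (23 * d)%:R * s.
Proof.
rewrite /Nq; set T := d%:R * (4 * s + 6).
have D1 : 1 <= d%:R :> R by rewrite ler1n.
have T0 : 0 <= T by rewrite /T mulr_ge0 //; move: s1 => ?; lra.
have tT : (Num.truncn T)%:R <= T by have /andP[] := truncn_itv T0.
rewrite aux_nat natrM.
by apply: aux_ineq.
Qed.

Lemma final_real :
  ((2 * size P * BB R d s P)%N)%:R <=
  ((2 * (4 * d + 1) ^ d * (23 * d) ^ d)%N)%:R * (size P)%:R * s ^+ d * (1 + lg (aspect_ratio P)).
Proof.
rewrite /BB /Np.
have -> : (2 * (2 * d)).+1 = (4 * d + 1)%N by rewrite addn1 mulnA.
set A := (4 * d + 1)%N; set n := size P; set Q := (2 * Nq R d s).+1.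
rewrite !natrM !natrX.
have -> : 2%:R * n%:R * ((KK R d P).+1%:R * A%:R ^+ d * Q%:R ^+ d) =
  (2%:R * n%:R * A%:R ^+ d) * ((KK R d P).+1%:R * Q%:R ^+ d) :> R by ring.
have -> : 2%:R * A%:R ^+ d * (23 * d)%:R ^+ d * n%:R * s ^+ d * (1 + lg (aspect_ratio P)) =
  (2%:R * n%:R * A%:R ^+ d) * ((1 + lg (aspect_ratio P)) * ((23 * d)%:R * s) ^+ d) :> R.
  by rewrite exprMn; ring.
apply: ler_wpM2l; first by rewrite !mulr_ge0 // exprn_ge0.
apply: ler_pM; first by [].
- exact: exprn_ge0.
- exact: K1_le.
- by apply: lerXn2r; rewrite ?nnegrE //; [rewrite mulr_ge0 //; move: s1 => ?; lra | exact: Q_le].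
Qed.

End Fin.

Theorem theorem15 (d : nat) (hd : (0 < d)%N) :
  exists C : nat,
  forall (R : realType) (P : seq 'rV[R]_d) (s : R)
         (order : seq ('rV[R]_d * 'rV[R]_d)),
    uniq P -> (2 <= size P)%N -> 1 < s ->
    perm_eq order (ordered_pairs P) ->
    let G := uncoordinated_graph s order in
    let n := size P in
    let alpha := aspect_ratio P in
    ((wspd_size (greedy_wspd P s G))%:R
       <= C%:R * n%:R * s ^+ d * (1 + lg alpha)) /\
    ((message_count P s G)%:R
       <= C%:R * n%:R * s ^+ d * (1 + lg alpha)).
Proof.
exists (2 * (4 * d + 1) ^ d * (23 * d) ^ d)%N.
move=> R P s order UP SP s1 Hperm G n alpha.
have I0 : GInv R d s [::] by split => // e1 e2.
have [[UG HB] Hsub] := @fold_inv R d s s1 order [::] I0.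
have HP : forall e, e \in G -> [/\ e.1 \in P, e.2 \in P & e.1 != e.2].
  move=> e /Hsub; rewrite in_nil /= (perm_mem Hperm) => /allpairsPdep [p [q [hp]]].
  by rewrite mem_filter => /andP[qp hq] ->; split => //=; rewrite eq_sym.
have Hm : (message_count P s G <= 2 * size P * BB R d s P)%N by apply: msg_bound.
have Ew : wspd_size (greedy_wspd P s G) = message_count P s G.
  by rewrite /wspd_size /greedy_wspd big_map.
rewrite Ew; split; (apply: le_trans (@final_real R d s P hd s1 UP SP); rewrite ler_nat; exact: Hm).
Qed.
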